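(* Let $k$ be even, and for $s\in\mathbb{F}_{2^{k-1}}$ let $L_s:\mathbb{F}_{2^{k-1}}\times\mathbb{F}_2\to\mathbb{F}_{2^{k-1}}\times\mathbb{F}_2$ be $L_s(x,\alpha)=(s^2x+s\operatorname{tr}(sx)+\alpha s,\operatorname{tr}(sx))$. Then: (i) $(x,\alpha)\cdot L_s(x,\alpha)=0$ for all $s,x\in\mathbb{F}_{2^{k-1}}$, $\alpha\in\mathbb{F}_2$; (ii) $(x,\alpha)\cdot L_s(y,\beta)=L_s(x,\alpha)\cdot(y,\beta)$ for all $s,x,y$, $\alpha,\beta$; (iii) if $r\neq s$ and $L_r(x,\alpha)=L_s(x,\alpha)$, then $(x,\alpha)=(0,0)$.
   Context: $\operatorname{tr}:\mathbb{F}_{2^{k-1}}\to\mathbb{F}_2$ is the field trace, and the bilinear form on $\mathbb{F}_{2^{k-1}}\times\mathbb{F}_2$ is $(x,\alpha)\cdot(y,\beta)=\operatorname{tr}(xy)+\alpha\beta$. *)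

(* Defs.v *)
From HB Require Import structures.
From mathcomp Require Import all_boot all_order all_algebra all_field.
Set Implicit Arguments. Unset Strict Implicit. Unset Printing Implicit Defensive.
Import GRing.Theory.
Local Open Scope ring_scope.

(* F plays the role of F_{2^m} (m = k-1); F_2 is identified with the prime
   subfield {a in F | a^2 = a} = {0,1} of F. *)

Definition ftr (F : finFieldType) (m : nat) (x : F) : F :=
  \sum_(i < m) x ^+ (2 ^ i).

Definition inF2 (F : finFieldType) (a : F) : bool := a ^+ 2 == a.

Definition dotV (F : finFieldType) (m : nat) (u v : F * F) : F :=
  ftr m (u.1 * v.1) + u.2 * v.2.

Definition Lmap (F : finFieldType) (m : nat) (s : F) (u : F * F) : F * F :=
  (s ^+ 2 * u.1 + s * ftr m (s * u.1) + u.2 * s, ftr m (s * u.1)).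

(* Main.v *)
Require Import Defs.
From HB Require Import structures.
From mathcomp Require Import all_boot all_order all_algebra all_field ring.
Import GRing.Theory.
Local Open Scope ring_scope.

Section S.
Variables (F : finFieldType) (h2 : (2%N \in [pchar F])).

Lemma sqrD (x y : F) : (x + y) ^+ 2 = x ^+ 2 + y ^+ 2.
Proof. by rewrite sqrrD mulrn_pchar // addr0. Qed.

Lemma pow2D (i : nat) (x y : F) : (x + y) ^+ (2 ^ i) = x ^+ (2 ^ i) + y ^+ (2 ^ i).
Proof.
elim: i => [|i IH]; first by rewrite !expn0 !expr1.
by rewrite expnSr !exprM IH sqrD.
Qed.

Lemma ftrD m (x y : F) : ftr m (x + y) = ftr m x + ftr m y.
Proof. by rewrite /ftr -big_split /=; apply: eq_bigr => i _; rewrite pow2D. Qed.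

Lemma ftr_sq m (x : F) : ftr m x ^+ 2 = ftr m (x ^+ 2).
Proof.
rewrite /ftr; elim/big_rec2: _ => [|i a b _ <-]; first by rewrite expr0n.
rewrite sqrD -!exprM; congr (_ + _); by rewrite mulnC -expnS.
Qed.

Lemma ftr_sq2 m (hm : #|F| = (2 ^ m)%N) (x : F) : ftr m (x ^+ 2) = ftr m x.
Proof.
case: m hm => [|m] hm; first by rewrite /ftr !big_ord0.
rewrite /ftr [LHS]big_ord_recr [RHS]big_ord_recl /=.
rewrite -exprM -expnS -hm expf_card expn0 expr1 addrC.
by congr (_ + _); apply: eq_bigr => i _; rewrite -exprM -expnS.
Qed.

Lemma ftr_idem m (hm : #|F| = (2 ^ m)%N) (x : F) : ftr m x ^+ 2 = ftr m x.
Proof. by rewrite ftr_sq ftr_sq2. Qed.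

Lemma F2_cases (a : F) : a ^+ 2 = a -> a = 0 \/ a = 1.
Proof.
move=> h; have : a * (a - 1) = 0 by rewrite mulrBr mulr1 -expr2 h subrr.
by move/eqP; rewrite mulf_eq0 subr_eq0 => /orP [] /eqP; auto.
Qed.

Lemma ftrZ m (c x : F) : c ^+ 2 = c -> ftr m (c * x) = c * ftr m x.
Proof.
case/F2_cases=> ->; last by rewrite !mul1r.
by rewrite !mul0r /ftr big1 // => i _; rewrite expr0n expn_eq0.
Qed.

Lemma ftr1 m : ftr m (1 : F) = m%:R.
Proof. by rewrite /ftr (eq_bigr (fun _ => 1)) ?sumr_const ?card_ord // => i _; rewrite expr1n. Qed.
End S.

Ltac simp h2 := rewrite ?(mul0r,mulr0,mul1r,mulr1,addr0,add0r,addrr_pchar2 h2).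

Theorem mainTheorem9 (k : nat) (F : finFieldType)
    (hk_even : ~~ odd k) (hk_pos : (0 < k)%N) (hF : #|F| = (2 ^ k.-1)%N) :
  (forall (s x alpha : F), inF2 alpha ->
     dotV k.-1 (x, alpha) (Lmap k.-1 s (x, alpha)) = 0)
  /\ (forall (s x y alpha beta : F), inF2 alpha -> inF2 beta ->
     dotV k.-1 (x, alpha) (Lmap k.-1 s (y, beta))
       = dotV k.-1 (Lmap k.-1 s (x, alpha)) (y, beta))
  /\ (forall (r s x alpha : F), inF2 alpha -> r != s ->
     Lmap k.-1 r (x, alpha) = Lmap k.-1 s (x, alpha) -> (x, alpha) = (0, 0)).
Proof.
set m := k.-1.
have h2 : (2%N \in [pchar F]) := card_finPcharP hF (erefl true).
have hm : #|F| = (2 ^ m)%N := hF.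
have hodd : odd m by move: hk_even hk_pos; rewrite /m; case: (k) => //= n; rewrite negbK.
have htr1 : ftr m (1 : F) = 1.
  rewrite ftr1 -[m]odd_double_half hodd natrD -mul2n natrM.
  by rewrite (pcharf0 h2) mul0r addr0.
have idm := @ftr_idem F h2 m hm.
split; [|split].
- move=> s x a /eqP ha; rewrite /dotV /Lmap /=.
  rewrite !mulrDr !ftrD //.
  have -> : x * (s ^+ 2 * x) = (s * x) ^+ 2 by ring.
  have -> : x * (s * ftr m (s * x)) = ftr m (s * x) * (s * x) by ring.
  have -> : x * (a * s) = a * (s * x) by ring.
  rewrite (@ftr_sq2 F m hm) (@ftrZ F m _ _ (idm _)) (@ftrZ F m _ _ ha).
  case: (@F2_cases F _ (idm (s * x))) => ->; case: (@F2_cases F _ ha) => ->; simp h2; done.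
- move=> s x y a b /eqP ha /eqP hb; rewrite /dotV /Lmap /=.
  rewrite mulrDl !mulrDr !mulrDl !ftrD //.
  have -> : x * (s ^+ 2 * y) = s ^+ 2 * x * y by ring.
  have -> : x * (s * ftr m (s * y)) = ftr m (s * y) * (s * x) by ring.
  have -> : x * (b * s) = b * (s * x) by ring.
  have -> : s * ftr m (s * x) * y = ftr m (s * x) * (s * y) by ring.
  have -> : a * s * y = a * (s * y) by ring.
  rewrite !(@ftrZ F m _ _ (idm _)) (@ftrZ F m _ _ ha) (@ftrZ F m _ _ hb); ring.
- move=> r s x a /eqP ha rs [e1 e2].
  rewrite e2 in e1.
  set t := ftr m (s * x) in e1 e2 *.
  have e3 : (r - s) * ((r + s) * x + (t + a)) = 0.
    have : (r ^+ 2 * x + r * t + a * r) - (s ^+ 2 * x + s * t + a * s) = 0 by rewrite e1 subrr.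
    by move=> <-; ring.
  have hrs : r - s != 0 by rewrite subr_eq0.
  have hrs' : r + s != 0 by rewrite -[s](oppr_pchar2 h2).
  move/eqP: e3; rewrite mulf_eq0 (negbTE hrs) /= => /eqP e3.
  have e4 : (r + s) * x = t + a.
    by rewrite -[t + a](oppr_pchar2 h2); apply/eqP; rewrite -addr_eq0 e3.
  have ht : t ^+ 2 = t := idm _.
  have hc : ftr m ((r + s) * x) = 0 by rewrite mulrDl ftrD // e2 addrr_pchar2.
  have x0 : (r + s) * x = 0 -> x = 0.
    by move/eqP; rewrite mulf_eq0 (negbTE hrs') /= => /eqP.
  have f0 : ftr m (0 : F) = 0 by rewrite /ftr big1 // => i _; rewrite expr0n expn_eq0.
  case: (@F2_cases F _ ht) e4 => tE; case: (@F2_cases F _ ha) => -> e4; rewrite tE in e4;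
    move: e4; simp h2 => e4.
  + by rewrite (x0 e4).
  + by move: hc; rewrite e4 htr1 => /eqP; rewrite oner_eq0.
  + by move: hc; rewrite e4 htr1 => /eqP; rewrite oner_eq0.
  + by move: tE; rewrite /t (x0 e4) mulr0 f0 => /eqP; rewrite eq_sym oner_eq0.
Qed.
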